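(* Suppose $X$ has well-defined scattered $\Pi_1$-products, $\kappa$ is a countable limit ordinal, and $\{A_\lambda\}_{\lambda<\kappa}$ is a transfinite sequence of homotopy cut-sets for paths $\alpha,\beta:[0,1]\to X$ such that (1) $A_{\lambda+1}\subseteq A_\lambda$ for all $\lambda<\kappa$; (2) $A_\lambda=\bigcap_{\mu<\lambda}A_\mu$ for every limit ordinal $\lambda<\kappa$; (3) whenever $(c,d)\in\mathcal{I}(A_{\lambda+1})$ contains $(a,b)\in\mathcal{I}(A_\lambda)$, we have $\alpha|_{[c,a]}\simeq\beta|_{[c,a]}$ if $c<a$ and $\alpha|_{[b,d]}\simeq\beta|_{[b,d]}$ if $b<d$. Then $A_\kappa=\bigcap_{\lambda<\kappa}A_\lambda$ is a homotopy cut-set for $\alpha$ and $\beta$.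
   Context: $\simeq$ is path-homotopy. For a compact set $A\subseteq\mathbb{R}$, $\mathcal{I}(A)$ is the set of connected components of $[\min A,\max A]\setminus A$. For paths $\alpha,\beta:[s,t]\to X$, a set $A\subseteq[s,t]$ is a homotopy cut-set for $\alpha,\beta$ if $A$ is closed, nowhere dense, contains $\{s,t\}$, $\alpha|_A=\beta|_A$, and $\alpha|_{[a,b]}\simeq\beta|_{[a,b]}$ for every $(a,b)\in\mathcal{I}(A)$. $X$ has well-defined scattered $\Pi_1$-products if any two paths $[0,1]\to X$ admitting a scattered homotopy cut-set are path-homotopic. *)

(* Defs.v *)
From Stdlib Require Import Reals.
Open Scope R_scope.

Record TopSpace := {
  carrier :> Type;
  is_open : (carrier -> Prop) -> Prop;
  open_full : is_open (fun _ => True);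
  open_inter : forall U V, is_open U -> is_open V -> is_open (fun x => U x /\ V x);
  open_union : forall F : (carrier -> Prop) -> Prop,
      (forall U, F U -> is_open U) -> is_open (fun x => exists U, F U /\ U x)
}.

Definition in_int (s t x : R) : Prop := s <= x <= t.

(** A path [s,t] -> X is (the restriction to [s,t] of) a map R -> X that is
    continuous on [s,t] (subspace topology). *)
Definition is_path {X : TopSpace} (s t : R) (f : R -> X) : Prop :=
  s <= t /\
  forall U, is_open X U -> forall x, in_int s t x -> U (f x) ->
    exists d, d > 0 /\ forall y, in_int s t y -> Rabs (y - x) < d -> U (f y).

Definition path_homotopic {X : TopSpace} (s t : R) (alpha beta : R -> X) : Prop :=
  is_path s t alpha /\ is_path s t beta /\
  exists H : R -> R -> X,
    (forall U, is_open X U -> forall x u, in_int s t x -> in_int 0 1 u -> U (H x u) ->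
       exists d, d > 0 /\ forall y v, in_int s t y -> in_int 0 1 v ->
         Rabs (y - x) < d -> Rabs (v - u) < d -> U (H y v)) /\
    (forall x, in_int s t x -> H x 0 = alpha x /\ H x 1 = beta x) /\
    (forall u, in_int 0 1 u -> H s u = alpha s /\ H t u = alpha t).

Definition closed_set (A : R -> Prop) : Prop :=
  forall x, ~ A x -> exists e, e > 0 /\ forall y, Rabs (y - x) < e -> ~ A y.

Definition nowhere_dense (A : R -> Prop) : Prop :=
  forall x y, x < y -> exists c d, x <= c /\ c < d /\ d <= y /\
    forall z, c < z < d -> ~ A z.

Definition scattered (A : R -> Prop) : Prop :=
  forall B : R -> Prop, (forall x, B x -> A x) -> (exists x, B x) ->
    exists x, B x /\ exists e, e > 0 /\ forall y, B y -> Rabs (y - x) < e -> y = x.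

(** (a,b) is an element of I(A): a connected component of
    [min A, max A] \ A, i.e. a maximal open gap of A with a < b, a, b in A. *)
Definition I_comp (A : R -> Prop) (a b : R) : Prop :=
  A a /\ A b /\ a < b /\ forall x, a < x < b -> ~ A x.

Definition homotopy_cut_set {X : TopSpace} (s t : R) (alpha beta : R -> X)
    (A : R -> Prop) : Prop :=
  (forall x, A x -> in_int s t x) /\
  closed_set A /\ nowhere_dense A /\ A s /\ A t /\
  (forall x, A x -> alpha x = beta x) /\
  (forall a b, I_comp A a b -> path_homotopic a b alpha beta).

Definition well_defined_scattered_products (X : TopSpace) : Prop :=
  forall alpha beta : R -> X, is_path 0 1 alpha -> is_path 0 1 beta ->
    (exists A, scattered A /\ homotopy_cut_set 0 1 alpha beta A) ->
    path_homotopic 0 1 alpha beta.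

(** Ordinals below kappa, represented by a well-ordered index type. *)
Definition countable_limit_ordinal (I : Type) (lt : I -> I -> Prop) : Prop :=
  (forall i, ~ lt i i) /\
  (forall i j k, lt i j -> lt j k -> lt i k) /\
  (forall i j, lt i j \/ i = j \/ lt j i) /\
  well_founded lt /\
  (exists f : I -> nat, forall i j, f i = f j -> i = j) /\
  (exists i : I, True) /\
  (forall i, exists j, lt i j).

Definition is_succ {I : Type} (lt : I -> I -> Prop) (l m : I) : Prop :=
  lt l m /\ forall n, ~ (lt l n /\ lt n m).

Definition is_limit {I : Type} (lt : I -> I -> Prop) (l : I) : Prop :=
  (exists m, lt m l) /\ forall m, lt m l -> exists n, lt m n /\ lt n l.

(* Main.v *)
Require Import Defs.
From Stdlib Require Import Reals.
From Stdlib Require Import Lra Classical FunctionalExtensionality IndefiniteDescription.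
Require Import Defs.
Open Scope R_scope.

Lemma Rabs_lt_iff x y e : Rabs (y - x) < e <-> x - e < y < x + e.
Proof. split; intro H. - apply Rabs_def2 in H; lra. - apply Rabs_def1; lra. Qed.

Lemma is_path_restr {X : TopSpace} s t a b (f : R -> X) :
  s <= a -> a <= b -> b <= t -> is_path s t f -> is_path a b f.
Proof.
  intros h1 h2 h3 [_ H]. split; auto. intros U HU x Hx HUx.
  destruct (H U HU x) as [d [Hd Hd']]; [unfold in_int in *; lra|auto|].
  exists d; split; auto. intros y Hy Hyx. apply Hd'; auto. unfold in_int in *; lra.
Qed.

Lemma path_affine {X : TopSpace} k m s t (f : R -> X) : k > 0 ->
  is_path (k*s+m) (k*t+m) f -> is_path s t (fun x => f (k*x+m)).
Proof.
  intros hk [hst H]. split.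
  { apply Rmult_le_reg_l with k; lra. }
  intros U HU x Hx HUx.
  destruct (H U HU (k*x+m)) as [d [Hd Hd']]; auto.
  { unfold in_int in *. split; apply Rplus_le_compat_r, Rmult_le_compat_l; lra. }
  exists (d / k). split. { apply Rdiv_lt_0_compat; lra. }
  intros y Hy Hyx. apply Hd'.
  { unfold in_int in *. split; apply Rplus_le_compat_r, Rmult_le_compat_l; lra. }
  replace (k*y+m - (k*x+m)) with (k*(y-x)) by ring.
  rewrite Rabs_mult, (Rabs_right k) by lra.
  apply Rmult_lt_compat_l with (r:=k) in Hyx; auto.
  replace (k * (d/k)) with d in Hyx by (field; lra). lra.
Qed.

Lemma ph_affine {X : TopSpace} k m s t (f g : R -> X) : k > 0 ->
  path_homotopic (k*s+m) (k*t+m) f g ->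
  path_homotopic s t (fun x => f (k*x+m)) (fun x => g (k*x+m)).
Proof.
  intros hk [pf [pg [H [HC [H0 H1]]]]].
  assert (hst : s <= t) by (destruct pf; apply Rmult_le_reg_l with k; lra).
  assert (hint : forall x, in_int s t x -> in_int (k*s+m) (k*t+m) (k*x+m)).
  { unfold in_int; intros x Hx. split; apply Rplus_le_compat_r, Rmult_le_compat_l; lra. }
  split; [apply path_affine; auto|]. split; [apply path_affine; auto|].
  exists (fun x u => H (k*x+m) u). split; [|split].
  - intros U HU x u Hx Hu HUx.
    destruct (HC U HU (k*x+m) u) as [d [Hd Hd']]; auto.
    exists (Rmin (d/k) d). split.
    { apply Rmin_pos; auto. apply Rdiv_lt_0_compat; lra. }
    intros y v Hy Hv Hyx Hvu. apply Hd'; auto.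
    + replace (k*y+m - (k*x+m)) with (k*(y-x)) by ring.
      rewrite Rabs_mult, (Rabs_right k) by lra.
      assert (Rabs (y - x) < d / k) by (eapply Rlt_le_trans; [apply Hyx|apply Rmin_l]).
      apply Rmult_lt_compat_l with (r:=k) in H2; auto.
      replace (k * (d/k)) with d in H2 by (field; lra). lra.
    + eapply Rlt_le_trans; [apply Hvu|apply Rmin_r].
  - intros x Hx. apply H0; auto.
  - intros u Hu. apply H1; auto.
Qed.

Lemma closed_refl B : closed_set B -> closed_set (fun y => B (-y)).
Proof.
  intros H x Hx. destruct (H (-x) Hx) as [e [He He']]. exists e; split; auto.
  intros y Hy. apply He'. replace (-y - - x) with (-(y-x)) by ring. rewrite Rabs_Ropp; auto.
Qed.

Lemma scattered_refl B : scattered B -> scattered (fun y => B (-y)).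
Proof.
  intros H C HC [x0 Hx0].
  destruct (H (fun z => C (-z))) as [x [Hx [e [He He']]]].
  { intros z Hz. apply HC in Hz. rewrite Ropp_involutive in Hz. auto. }
  { exists (-x0). rewrite Ropp_involutive; auto. }
  exists (-x). split; auto. exists e; split; auto. intros y Hy Hyx.
  assert (-y = x). { apply He'. rewrite Ropp_involutive; auto.
    replace (-y - x) with (-(y - -x)) by ring. rewrite Rabs_Ropp; auto. }
  lra.
Qed.

Lemma Icomp_refl B p q : I_comp B p q -> I_comp (fun y => B (-y)) (-q) (-p).
Proof.
  intros [h1 [h2 [h3 h4]]]. repeat split; try rewrite Ropp_involutive; auto; try lra.
  intros x Hx. apply h4; lra.
Qed.

Lemma scattered_products_st (X : TopSpace) (alpha beta : R -> X) (S : R -> Prop) s t :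
  well_defined_scattered_products X -> s < t ->
  is_path s t alpha -> is_path s t beta -> scattered S ->
  homotopy_cut_set s t alpha beta S -> path_homotopic s t alpha beta.
Proof.
  intros W hst pa pb sc [c1 [c2 [c3 [c4 [c5 [c6 c7]]]]]].
  set (k := t - s). assert (hk : k > 0) by (unfold k; lra).
  assert (E0 : k*0+s = s) by ring. assert (E1 : k*1+s = t) by (unfold k; ring).
  set (phi := fun x => k*x+s).
  assert (Hinv : forall z, phi ((z - s)/k) = z) by (intro z; unfold phi; field; lra).
  assert (Hinv2 : forall x, (phi x - s)/k = x) by (intro x; unfold phi; field; lra).
  set (S' := fun x => S (phi x)).
  assert (P : path_homotopic 0 1 (fun x => alpha (k*x+s)) (fun x => beta (k*x+s))).
  { apply W.
    - apply path_affine; auto. rewrite E0, E1; auto.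
    - apply path_affine; auto. rewrite E0, E1; auto.
    - exists S'. split.
      + intros C HC [x0 Hx0].
        destruct (sc (fun z => C ((z - s)/k))) as [z [Hz [e [He He']]]].
        { intros z Hz. apply HC in Hz. unfold S' in Hz. rewrite Hinv in Hz; auto. }
        { exists (phi x0). rewrite Hinv2; auto. }
        exists ((z-s)/k). split; auto. exists (e/k). split.
        { apply Rdiv_lt_0_compat; lra. }
        intros y Hy Hyz. rewrite <- (Hinv2 y).
        assert (phi y = z) as Ez; [|rewrite Ez; reflexivity].
        apply He'. rewrite Hinv2; auto.
        replace (phi y - z) with (k * (y - (z-s)/k)) by (unfold phi; field; lra).
        rewrite Rabs_mult, (Rabs_right k) by lra.
        apply Rmult_lt_compat_l with (r:=k) in Hyz; auto.
        replace (k * (e/k)) with e in Hyz by (field; lra). lra.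
      + split; [|split; [|split; [|split; [|split; [|split]]]]].
        * intros x1 Hx. apply c1 in Hx. unfold S', phi, in_int in *.
          destruct Hx. split.
          -- apply Rmult_le_reg_l with k; lra.
          -- apply Rmult_le_reg_l with k; lra.
        * intros x Hx. destruct (c2 (phi x) Hx) as [e [He He']].
          exists (e/k). split. { apply Rdiv_lt_0_compat; lra. }
          intros y Hy. apply He'.
          replace (phi y - phi x) with (k * (y - x)) by (unfold phi; ring).
          rewrite Rabs_mult, (Rabs_right k) by lra.
          apply Rmult_lt_compat_l with (r:=k) in Hy; auto.
          replace (k * (e/k)) with e in Hy by (field; lra). lra.
        * intros x y Hxy. destruct (c3 (phi x) (phi y)) as [c [d [h1 [h2 [h3 h4]]]]].
          { unfold phi. apply Rplus_lt_compat_r, Rmult_lt_compat_l; lra. }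
          exists ((c-s)/k), ((d-s)/k). rewrite <- (Hinv2 x), <- (Hinv2 y).
          assert (M : forall u v, u <= v -> (u - s)/k <= (v-s)/k).
          { intros u v h. unfold Rdiv. apply Rmult_le_compat_r.
            - left. apply Rinv_0_lt_compat; lra.
            - lra. }
          assert (M' : forall u v, u < v -> (u - s)/k < (v-s)/k).
          { intros u v h. unfold Rdiv. apply Rmult_lt_compat_r.
            - apply Rinv_0_lt_compat; lra.
            - lra. }
          repeat split; try apply M; try apply M'; auto.
          intros z Hz. unfold S'. apply h4. split.
          -- rewrite <- (Hinv c). unfold phi. apply Rplus_lt_compat_r, Rmult_lt_compat_l; lra.
          -- rewrite <- (Hinv d). unfold phi. apply Rplus_lt_compat_r, Rmult_lt_compat_l; lra.
        * unfold S', phi. rewrite E0; auto.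
        * unfold S', phi. rewrite E1; auto.
        * intros x Hx. apply c6; auto.
        * intros p q [h1 [h2 [h3 h4]]]. apply ph_affine; auto. apply c7.
          repeat split; auto.
          { unfold phi. apply Rplus_lt_compat_r, Rmult_lt_compat_l; lra. }
          intros z Hz. rewrite <- (Hinv z). apply h4. rewrite <- (Hinv2 p), <- (Hinv2 q).
          split; unfold Rdiv; apply Rmult_lt_compat_r; try (apply Rinv_0_lt_compat; lra);
            unfold phi in *; lra. }
  assert (Q : path_homotopic s t
     (fun x => (fun y => alpha (k*y+s)) (/k*x + -s/k))
     (fun x => (fun y => beta (k*y+s)) (/k*x + -s/k))).
  { apply (ph_affine (/k) (-s/k) s t (fun y => alpha (k*y+s)) (fun y => beta (k*y+s))). { apply Rinv_0_lt_compat; lra. }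
    replace (/k * s + - s / k) with 0 by (field; lra).
    replace (/k * t + - s / k) with 1 by (unfold k; field; lra). exact P. }
  cbv beta in Q.
  replace (fun x => alpha (k * (/ k * x + - s / k) + s)) with alpha in Q.
  2: { apply functional_extensionality; intro x. f_equal. field. lra. }
  replace (fun x => beta (k * (/ k * x + - s / k) + s)) with beta in Q.
  2: { apply functional_extensionality; intro x. f_equal. field. lra. }
  exact Q.
Qed.

Lemma sup_pt (B : R -> Prop) c p : closed_set B -> B c -> c <= p ->
  exists x, B x /\ c <= x <= p /\ forall y, x < y -> y <= p -> ~ B y.
Proof.
  intros Hcl Hc Hcp.
  destruct (completeness (fun y => B y /\ y <= p)) as [x [Hub Hlub]].
  { exists p. intros y [_ Hy]; auto. }
  { exists c; auto. }
  assert (Hxp : x <= p) by (apply Hlub; intros y [_ Hy]; auto).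
  assert (Hcx : c <= x) by (apply Hub; auto).
  exists x. split; [|split; [lra|]].
  - apply NNPP; intro Hn. destruct (Hcl x Hn) as [e [He He']].
    assert (~ is_upper_bound (fun y => B y /\ y <= p) (x - e)).
    { intro Hu. apply Hlub in Hu. lra. }
    apply not_all_ex_not in H as [y Hy].
    apply imply_to_and in Hy as [[Hy1 Hy2] Hy3].
    assert (y <= x) by (apply Hub; auto).
    apply (He' y); auto. apply Rabs_lt_iff. lra.
  - intros y Hxy Hyp Hy. assert (y <= x) by (apply Hub; auto). lra.
Qed.

Lemma gap_around (B : R -> Prop) a b x : closed_set B -> B a -> B b -> a < x < b -> ~ B x ->
  exists a0 b0, I_comp B a0 b0 /\ a <= a0 < x /\ x < b0 <= b.
Proof.
  intros Hcl Ha Hb Hx Hnx.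
  destruct (sup_pt B a x) as [a0 [Ha0 [Ha0x Ha0m]]]; auto; try lra.
  destruct (sup_pt (fun y => B (-y)) (-b) (-x)) as [b0' [Hb0 [Hb0x Hb0m]]];
    [apply closed_refl; auto| rewrite Ropp_involutive; auto| lra|].
  assert (a0 <> x) by (intro; subst; auto).
  assert (b0' <> -x) by (intro E; subst; rewrite Ropp_involutive in Hb0; auto).
  exists a0, (-b0'). repeat split; auto; try lra.
  intros z Hz. destruct (Rle_or_lt z x).
  - apply Ha0m; lra.
  - intro Bz. apply (Hb0m (-z)); try lra. rewrite Ropp_involutive; auto.
Qed.

Section Ord.
Variables (I : Type) (lt : I -> I -> Prop).
Hypothesis irr : forall i, ~ lt i i.
Hypothesis trn : forall i j k, lt i j -> lt j k -> lt i k.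
Hypothesis tri : forall i j, lt i j \/ i = j \/ lt j i.
Hypothesis wf : well_founded lt.

Definition le i j := lt i j \/ i = j.

Lemma wf_least (P : I -> Prop) : (exists x, P x) -> exists x, P x /\ forall y, P y -> le x y.
Proof.
  intros [x0 Hx0]. apply NNPP; intro Hn.
  assert (forall x, ~ P x); [|eapply H; eauto].
  intro x. induction x as [x IH] using (well_founded_ind wf).
  intro Px. apply Hn. exists x. split; auto. intros y Py.
  destruct (tri x y) as [h|[h|h]]; [left; auto|right; auto|].
  exfalso. apply (IH y h Py).
Qed.

Lemma not_lt_le x y : ~ lt y x -> le x y.
Proof. intro h. destruct (tri x y) as [h'|[h'|h']]; [left|right|]; tauto. Qed.

Lemma le_not_lt x y : le x y -> ~ lt y x.
Proof. intros [h|h] h'; [apply (irr x); eauto|subst; eapply irr; eauto]. Qed.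

Lemma le_trans x y z : le x y -> le y z -> le x z.
Proof. intros [h|h] [h'|h']; subst; try (left; eauto; fail); right; auto. Qed.

Lemma le_lt_trans x y z : le x y -> lt y z -> lt x z.
Proof. intros [h|h] h'; subst; eauto. Qed.

Lemma pred_cases r : (exists m, lt m r) -> (exists t, is_succ lt t r) \/ is_limit lt r.
Proof.
  intros Hm. destruct (classic (is_limit lt r)) as [h|h]; [right; auto|left].
  unfold is_limit in h. apply not_and_or in h as [h|h]; [tauto|].
  apply not_all_ex_not in h as [m h]. apply imply_to_and in h as [h1 h2].
  exists m. split; auto. intros n [hn1 hn2]. apply h2. eauto.
Qed.

Lemma succ_le t r p : is_succ lt t r -> lt p r -> le p t.
Proof.
  intros [h1 h2] hp. apply not_lt_le. intro h. apply (h2 p); auto.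
Qed.

Lemma max_ex x y : exists z, le x z /\ le y z /\ (z = x \/ z = y).
Proof.
  destruct (tri x y) as [h|[h|h]].
  - exists y. unfold le; tauto.
  - exists y. unfold le; tauto.
  - exists x. unfold le; tauto.
Qed.

Variable A : I -> R -> Prop.
Hypothesis Asucc : forall l m, is_succ lt l m -> forall x, A m x -> A l x.
Hypothesis Alim : forall l, is_limit lt l -> forall x, A l x <-> (forall m, lt m l -> A m x).

Lemma A_mono s t x : le s t -> A t x -> A s x.
Proof.
  revert s. induction t as [t IH] using (well_founded_ind wf).
  intros s [h|h] Ht; [|subst; auto].
  destruct (pred_cases t) as [[p Hp]|Hl]; [eauto| |].
  - apply (IH p); [apply Hp| apply (succ_le p t s); auto| eapply Asucc; eauto].
  - apply (proj1 (Alim t Hl x) Ht); auto.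
Qed.
End Ord.
Arguments le {I} lt i j.

Definition TL {I : Type} (a : R) (e : I -> R) (x : R) : Prop := x = a \/ exists n, x = e n.

Section Side.
#[local] Set Default Proof Using "All".
Variables (I : Type) (lt : I -> I -> Prop).
Hypothesis irr : forall i, ~ lt i i.
Hypothesis trn : forall i j k, lt i j -> lt j k -> lt i k.
Hypothesis tri : forall i j, lt i j \/ i = j \/ lt j i.
Hypothesis wf : well_founded lt.
Variable A : I -> R -> Prop.
Hypothesis Acl : forall n, closed_set (A n).
Hypothesis Amono : forall s t x, le lt s t -> A t x -> A s x.
Hypothesis Alim : forall r, is_limit lt r -> forall x, (forall t, lt t r -> A t x) -> A r x.
Variables a a0 : R.
Hypothesis Aa : forall n, A n a.
Hypothesis aa0 : a <= a0.
Hypothesis gapH : forall x, (forall n, A n x) -> a < x -> x <= a0 -> False.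
Variable e : I -> R.
Hypothesis eA : forall n, A n (e n).
Hypothesis ele : forall n, e n <= a0.
Hypothesis emax : forall n y, e n < y -> y <= a0 -> ~ A n y.
Variable n0 : I.
Hypothesis e0 : e n0 = a0.

Lemma e_ge n : a <= e n.
Proof. apply Rnot_lt_le; intro h. apply (emax n a); auto. Qed.

Lemma e_mono s t : le lt s t -> e t <= e s.
Proof.
  intro h. apply Rnot_lt_le; intro h'. apply (emax s (e t)); auto. eapply Amono; eauto.
Qed.

Lemma glb_lemma (D : I -> Prop) : (exists t, D t) ->
  (forall s t, D s -> D t -> exists u, D u /\ le lt s u /\ le lt t u) ->
  forall x, (forall t, D t -> x <= e t) ->
  exists m, x <= m /\ m <= a0 /\ forall t, D t -> A t m.
Proof.
  intros [t0 Ht0] Hdir x Hx.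
  destruct (completeness (fun y => exists t, D t /\ y = - e t)) as [M [Hub Hlub]].
  { exists (-x). intros y [t [Ht ->]]. specialize (Hx t Ht); lra. }
  { exists (- e t0). eauto. }
  assert (Hm : forall t, D t -> - M <= e t).
  { intros t Ht. assert (- e t <= M) by (apply Hub; eauto). lra. }
  exists (-M). split; [|split].
  - assert (M <= -x); [|lra]. apply Hlub. intros y [t [Ht ->]]. specialize (Hx t Ht); lra.
  - specialize (Hm t0 Ht0). specialize (ele t0). lra.
  - intros s Hs. apply NNPP; intro Hn. destruct (Acl s (-M) Hn) as [ep [Hep Hep']].
    assert (~ is_upper_bound (fun y => exists t, D t /\ y = - e t) (M - ep)).
    { intro Hu. apply Hlub in Hu. lra. }
    apply not_all_ex_not in H as [y Hy].
    apply imply_to_and in Hy as [[t [Ht ->]] Hy3].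
    destruct (Hdir s t Hs Ht) as [u [Hu [Hsu Htu]]].
    assert (e u <= e t) by (apply e_mono; auto).
    assert (- M <= e u) by auto.
    apply (Hep' (e u)).
    + apply Rabs_lt_iff. lra.
    + eapply Amono; eauto.
Qed.

Lemma inf_all x : a < x -> exists t, e t < x.
Proof.
  intro hx. apply NNPP; intro Hn.
  assert (H : forall t, x <= e t).
  { intro t. apply Rnot_lt_le. intro h. apply Hn; eauto. }
  destruct (glb_lemma (fun _ => True)) with (x := x) as [m [h1 [h2 h3]]]; auto.
  { exists n0; auto. }
  { intros s t _ _. destruct (max_ex I lt tri s t) as [u [? [? ?]]]. exists u; auto. }
  apply (gapH m); auto. lra.
Qed.

Lemma lim_lemma r : is_limit lt r -> forall x, (forall t, lt t r -> x <= e t) -> x <= e r.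
Proof.
  intros Hl x Hx.
  destruct (glb_lemma (fun t => lt t r)) with (x := x) as [m [h1 [h2 h3]]]; auto.
  { destruct Hl as [[m Hm] _]; eauto. }
  { intros s t hs ht. destruct (max_ex I lt tri s t) as [u [? [? [E|E]]]]; exists u; rewrite E in *; auto. }
  apply Rnot_lt_le; intro h. apply (emax r m); auto. lra.
Qed.

Lemma least_below x : a < x -> exists r, e r < x /\ forall p, e p < x -> le lt r p.
Proof.
  intro hx. destruct (wf_least I lt tri wf (fun r => e r < x)) as [r [h1 h2]].
  { apply inf_all; auto. }
  eauto.
Qed.

Lemma TL_bounds x : TL a e x -> a <= x <= a0.
Proof.
  intros [->|[n ->]]. - specialize (e_ge n0); lra. - split; [apply e_ge|apply ele].
Qed.

Lemma TL_closed : closed_set (TL a e).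
Proof.
  intros x Hx.
  assert (Hxa : x <> a) by (intro; apply Hx; left; auto).
  assert (Hxe : forall n, x <> e n) by (intros n h; apply Hx; right; eauto).
  destruct (Rlt_or_le x a) as [h|h].
  { exists (a - x). split; [lra|]. intros y Hy Ty. apply TL_bounds in Ty.
    apply Rabs_lt_iff in Hy. lra. }
  destruct (Rlt_or_le a0 x) as [h'|h'].
  { exists (x - a0). split; [lra|]. intros y Hy Ty. apply TL_bounds in Ty.
    apply Rabs_lt_iff in Hy. lra. }
  assert (hax : a < x) by (destruct h; auto; congruence).
  destruct (least_below x hax) as [r [Hr Hrl]].
  assert (Hge : forall t, lt t r -> x <= e t).
  { intros t ht. apply Rnot_lt_le. intro h2. apply (le_not_lt I lt irr trn r t); auto. }
  assert (Hn0r : lt n0 r).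
  { destruct (tri n0 r) as [?|[E|E]]; auto; exfalso.
    - subst. lra.
    - assert (e n0 <= e r) by (apply e_mono; left; auto). lra. }
  destruct (pred_cases I lt r) as [[t Ht]|Hl]; [eauto| |].
  - assert (Hxt : x < e t).
    { destruct (Hge t (proj1 Ht)); auto. exfalso; apply (Hxe t); auto. }
    exists (Rmin (x - e r) (e t - x)). split. { apply Rmin_pos; lra. }
    intros y Hy Ty. apply Rabs_lt_iff in Hy.
    assert (Hm1 := Rmin_l (x - e r) (e t - x)). assert (Hm2 := Rmin_r (x - e r) (e t - x)).
    destruct Ty as [->|[p ->]].
    + assert (a <= e r) by apply e_ge. lra.
    + destruct (tri p r) as [hp|[hp|hp]].
      * assert (e t <= e p) by (apply e_mono; apply (succ_le I lt tri t r p); auto). lra.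
      * subst. lra.
      * assert (e p <= e r) by (apply e_mono; left; auto). lra.
  - assert (x <= e r) by (apply lim_lemma; auto). lra.
Qed.

Lemma TL_scattered : scattered (TL a e).
Proof.
  intros B HB [x0 Hx0].
  destruct (classic (exists n, B (e n))) as [[n Hn]|Hne].
  - destruct (wf_least I lt tri wf (fun n => B (e n))) as [v [Hv Hvl]]; eauto.
    exists (e v). split; auto.
    destruct (Rle_or_lt (e v) a) as [h|h].
    + exists 1. split; [lra|]. intros y Hy _. destruct (HB y Hy) as [->|[p ->]].
      * assert (a <= e v) by apply e_ge. lra.
      * assert (e p <= e v) by (apply e_mono; auto). assert (a <= e p) by apply e_ge. lra.
    + destruct (least_below (e v) h) as [r [Hr Hrl]].
      exists (e v - e r). split; [lra|]. intros y Hy Hyx. apply Rabs_lt_iff in Hyx.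
      destruct (HB y Hy) as [->|[p ->]].
      * assert (a <= e r) by apply e_ge. lra.
      * assert (e p <= e v) by (apply e_mono; auto).
        destruct (Rle_lt_or_eq_dec _ _ H) as [h2|h2]; auto.
        assert (e p <= e r) by (apply e_mono; auto). lra.
  - exists x0. split; auto. exists 1. split; [lra|]. intros y Hy _.
    destruct (HB y Hy) as [->|[p ->]]; [|exfalso; eauto].
    destruct (HB x0 Hx0) as [->|[p ->]]; [auto|exfalso; eauto].
Qed.

Lemma TL_gap p q : I_comp (TL a e) p q -> exists t r, is_succ lt t r /\ p = e r /\ q = e t.
Proof.
  intros [Tp [Tq [hpq Hb]]].
  assert (hp := TL_bounds p Tp). assert (hq := TL_bounds q Tq).
  destruct Tq as [Eq|[s Es]]; [lra|].
  destruct (least_below q) as [r [Hr Hrl]]; [lra|].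
  assert (Hge : forall t, lt t r -> q <= e t).
  { intros t ht. apply Rnot_lt_le. intro h2. apply (le_not_lt I lt irr trn r t); auto. }
  assert (Hsr : lt s r).
  { destruct (tri s r) as [?|[E|E]]; auto; exfalso.
    - subst. lra.
    - assert (e s <= e r) by (apply e_mono; left; auto). lra. }
  destruct (pred_cases I lt r) as [[t Ht]|Hl]; [eauto| |].
  - exists t, r. split; auto.
    assert (Et : e t = q).
    { assert (q <= e t) by (apply Hge, Ht).
      assert (e t <= e s) by (apply e_mono; apply (succ_le I lt tri t r s); auto). lra. }
    split; auto.
    assert (e r <= p).
    { apply Rnot_lt_le; intro h. apply (Hb (e r)); [lra| right; eauto]. }
    destruct Tp as [->|[pp ->]].
    + assert (a <= e r) by apply e_ge. lra.
    + assert (e pp <= e r) by (apply e_mono; apply Hrl; lra). lra.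
  - assert (q <= e r) by (apply lim_lemma; auto). lra.
Qed.
End Side.

Theorem mainTheorem17 (X : TopSpace) (I : Type) (lt : I -> I -> Prop)
  (alpha beta : R -> X) (A : I -> R -> Prop) :
  well_defined_scattered_products X ->
  countable_limit_ordinal I lt ->
  is_path 0 1 alpha -> is_path 0 1 beta ->
  (forall l, homotopy_cut_set 0 1 alpha beta (A l)) ->
  (forall l m, is_succ lt l m -> forall x, A m x -> A l x) ->
  (forall l, is_limit lt l -> forall x, A l x <-> (forall m, lt m l -> A m x)) ->
  (forall l m, is_succ lt l m -> forall a b c d,
      I_comp (A m) c d -> I_comp (A l) a b -> c <= a -> b <= d ->
      (c < a -> path_homotopic c a alpha beta) /\
      (b < d -> path_homotopic b d alpha beta)) ->
  homotopy_cut_set 0 1 alpha beta (fun x => forall l, A l x).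
Proof.
  intros W Hord pa pb Hcut Asucc Alim H3.
  destruct Hord as [irr [trn [tri [wf [_ [[l0 _] _]]]]]].
  assert (Amono : forall s t x, le lt s t -> A t x -> A s x)
    by exact (A_mono I lt tri wf A Asucc Alim).
  assert (Acl : forall n, closed_set (A n)) by (intro n; apply (Hcut n)).
  assert (Alim' : forall r, is_limit lt r -> forall x, (forall t, lt t r -> A t x) -> A r x)
    by (intros r Hr x; apply (Alim r Hr x)).
  split; [|split; [|split; [|split; [|split; [|split]]]]].
  - intros x Hx. destruct (Hcut l0) as [h _]. apply h, Hx.
  - intros x Hx. apply not_all_ex_not in Hx as [l Hl].
    destruct (Acl l x Hl) as [e [He He']]. exists e; split; auto.
    intros y Hy Hy'. apply (He' y Hy); apply Hy'.
  - intros x y hxy. destruct (Hcut l0) as [_ [_ [hn _]]].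
    destruct (hn x y hxy) as [c [d [? [? [? h]]]]]. exists c, d. repeat split; auto.
    intros z hz hz'. apply (h z hz (hz' l0)).
  - intro l. apply (Hcut l).
  - intro l. apply (Hcut l).
  - intros x Hx. destruct (Hcut l0) as [_ [_ [_ [_ [_ [h _]]]]]]. apply h, Hx.
  - intros a b Hab. destruct Hab as [Aka [Akb [hab Hnone]]].
    assert (Hx : ~ (forall l, A l ((a+b)/2))) by (apply Hnone; lra).
    apply not_all_ex_not in Hx as [l1 Hl1].
    destruct (gap_around (A l1) a b ((a+b)/2)) as [a0 [b0 [Igap [ha0 hb0]]]]; auto; try lra.
    assert (Hex : forall n, exists y, A n y /\ a <= y <= a0 /\ forall z, y < z -> z <= a0 -> ~ A n z)
      by (intro n; apply sup_pt; auto; lra).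
    assert (Hex' : forall n, exists y, A n (-y) /\ -b <= y <= -b0 /\
                     forall z, y < z -> z <= -b0 -> ~ A n (-z)).
    { intro n. apply (sup_pt (fun y => A n (-y))); [apply closed_refl; auto| |lra].
      rewrite Ropp_involutive; auto. }
    destruct (constructive_indefinite_description _
      (ex_intro (fun e : I -> R => forall n, A n (e n) /\ a <= e n <= a0 /\
         forall z, e n < z -> z <= a0 -> ~ A n z)
         (fun n => proj1_sig (constructive_indefinite_description _ (Hex n)))
         (fun n => proj2_sig (constructive_indefinite_description _ (Hex n)))))
      as [e He].
    destruct (constructive_indefinite_description _
      (ex_intro (fun e : I -> R => forall n, A n (- e n) /\ -b <= e n <= -b0 /\
         forall z, e n < z -> z <= -b0 -> ~ A n (-z))
         (fun n => proj1_sig (constructive_indefinite_description _ (Hex' n)))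
         (fun n => proj2_sig (constructive_indefinite_description _ (Hex' n)))))
      as [f Hf].
    clear Hex Hex'.
    destruct Igap as [Aa0 [Ab0 [hab0 Hg0]]].
    assert (Aa : forall n, A n a) by auto.
    assert (aa0 : a <= a0) by lra.
    assert (gapH : forall x, (forall n, A n x) -> a < x -> x <= a0 -> False)
      by (intros x Hx h1 h2; apply (Hnone x); auto; lra).
    assert (eA : forall n, A n (e n)) by (intro n; apply He).
    assert (ele : forall n, e n <= a0) by (intro n; apply He).
    assert (emax : forall n y, e n < y -> y <= a0 -> ~ A n y) by (intro n; apply He).
    assert (e0 : e l1 = a0).
    { destruct (He l1) as [_ [h1 h2]]. destruct (Rle_lt_or_eq_dec _ _ (proj2 h1)); auto.
      exfalso. apply (h2 a0); auto; lra. }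
    set (A' := fun n y => A n (-y)).
    assert (Acl' : forall n, closed_set (A' n)) by (intro n; apply closed_refl; auto).
    assert (Amono' : forall s t x, le lt s t -> A' t x -> A' s x) by (unfold A'; eauto).
    assert (Alim'' : forall r, is_limit lt r -> forall x, (forall t, lt t r -> A' t x) -> A' r x)
      by (unfold A'; eauto).
    assert (Aa' : forall n, A' n (-b)) by (intro n; unfold A'; rewrite Ropp_involutive; auto).
    assert (aa0' : -b <= -b0) by lra.
    assert (gapH' : forall x, (forall n, A' n x) -> -b < x -> x <= -b0 -> False)
      by (unfold A'; intros x Hx h1 h2; apply (Hnone (-x)); auto; lra).
    assert (eA' : forall n, A' n (f n)) by (intro n; apply Hf).
    assert (ele' : forall n, f n <= -b0) by (intro n; apply Hf).
    assert (emax' : forall n y, f n < y -> y <= -b0 -> ~ A' n y) by (intro n; apply Hf).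
    assert (e0' : f l1 = -b0).
    { destruct (Hf l1) as [_ [h1 h2]]. destruct (Rle_lt_or_eq_dec _ _ (proj2 h1)); auto.
      exfalso. apply (h2 (-b0)); auto; try lra. rewrite Ropp_involutive; auto. }
    pose proof (TL_bounds I lt irr trn tri wf A Acl Amono Alim' a a0 Aa aa0 gapH e eA ele emax l1 e0) as LB.
    pose proof (TL_closed I lt irr trn tri wf A Acl Amono Alim' a a0 Aa aa0 gapH e eA ele emax l1 e0) as LC.
    pose proof (TL_scattered I lt irr trn tri wf A Acl Amono Alim' a a0 Aa aa0 gapH e eA ele emax l1 e0) as LS.
    pose proof (TL_gap I lt irr trn tri wf A Acl Amono Alim' a a0 Aa aa0 gapH e eA ele emax l1 e0) as LG.
    pose proof (e_mono I lt irr trn tri wf A Acl Amono Alim' a a0 Aa aa0 gapH e eA ele emax l1 e0) as LM.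
    pose proof (TL_bounds I lt irr trn tri wf A' Acl' Amono' Alim'' (-b) (-b0) Aa' aa0' gapH' f eA' ele' emax' l1 e0') as RB.
    pose proof (TL_closed I lt irr trn tri wf A' Acl' Amono' Alim'' (-b) (-b0) Aa' aa0' gapH' f eA' ele' emax' l1 e0') as RC.
    pose proof (TL_scattered I lt irr trn tri wf A' Acl' Amono' Alim'' (-b) (-b0) Aa' aa0' gapH' f eA' ele' emax' l1 e0') as RS.
    pose proof (TL_gap I lt irr trn tri wf A' Acl' Amono' Alim'' (-b) (-b0) Aa' aa0' gapH' f eA' ele' emax' l1 e0') as RG.
    pose proof (e_mono I lt irr trn tri wf A' Acl' Amono' Alim'' (-b) (-b0) Aa' aa0' gapH' f eA' ele' emax' l1 e0') as RM.
    clear He Hf.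
    set (T := fun x => TL a e x \/ TL (-b) f (-x)).
    assert (La0 : TL a e a0) by (right; exists l1; auto).
    assert (Rb0 : TL (-b) f (-b0)) by (right; exists l1; auto).
    assert (Icomp : forall n, le lt l1 n -> I_comp (A n) (e n) (- f n)).
    { intros n hn. split; [auto|split; [apply (eA' n)|split]].
      - specialize (ele n). specialize (ele' n). lra.
      - intros z hz Az. destruct (Rle_or_lt z a0) as [h|h].
        + apply (emax n z); auto; lra.
        + destruct (Rle_or_lt b0 z) as [h'|h'].
          * apply (emax' n (-z)); [lra|lra|]. unfold A'. rewrite Ropp_involutive; auto.
          * apply (Hg0 z); [lra|]. eapply Amono; eauto. }
    assert (Tsub : forall x, T x -> A l1 x).
    { intros x [[->|[n ->]]|[Ex|[n Ex]]].
      - auto.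
      - destruct (tri n l1) as [h|[h|h]].
        + assert (e l1 <= e n) by (apply LM; left; auto). specialize (ele n).
          replace (e n) with a0 by lra. auto.
        + subst; auto.
        + eapply Amono; [left; eauto|auto].
      - replace x with b by lra. auto.
      - replace x with (- f n) by lra.
        destruct (tri n l1) as [h|[h|h]].
        + assert (f l1 <= f n) by (apply RM; left; auto). specialize (ele' n).
          replace (f n) with (-b0) by lra. rewrite Ropp_involutive. auto.
        + subst; apply (eA' l1).
        + eapply Amono; [left; eauto|apply (eA' n)]. }
    assert (Tb : forall x, T x -> a <= x <= b).
    { intros x [h|h]; [apply LB in h|apply RB in h]; lra. }
    destruct (Hcut l0) as [c1 _].
    assert (h01 : 0 <= a /\ b <= 1) by (split; [apply (c1 a (Aka l0))|apply (c1 b (Akb l0))]).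
    apply scattered_products_st with (S := T); auto.
    + apply (is_path_restr 0 1); auto; lra.
    + apply (is_path_restr 0 1); auto; lra.
    +
      intros B HB [x0 Hx0].
      destruct (classic (exists x, B x /\ TL a e x)) as [HL|HL].
      * destruct (LS (fun x => B x /\ TL a e x)) as [x [[Bx Lx] [ep [Hep Hep']]]]; [tauto|auto|].
        exists x. split; auto. exists (Rmin ep (b0 - a0)). split; [apply Rmin_pos; lra|].
        intros y By Hyx. assert (Hm1 := Rmin_l ep (b0 - a0)). assert (Hm2 := Rmin_r ep (b0 - a0)).
        destruct (HB y By) as [Ly|Ry].
        -- apply Hep'; auto. lra.
        -- apply LB in Lx. apply RB in Ry. apply Rabs_lt_iff in Hyx. lra.
      * destruct (RS (fun z => B (-z) /\ TL (-b) f z)) as [z [[Bz Rz] [ep [Hep Hep']]]].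
        { tauto. }
        { exists (-x0). rewrite Ropp_involutive. split; auto.
          destruct (HB x0 Hx0); auto. exfalso; eauto. }
        exists (-z). split; auto. exists ep. split; auto. intros y By Hyz.
        assert (-y = z); [|lra]. apply Hep'.
        -- rewrite Ropp_involutive. split; auto. destruct (HB y By); auto. exfalso; eauto.
        -- replace (-y - z) with (-(y - -z)) by ring. rewrite Rabs_Ropp; auto.
    + split; [|split; [|split; [|split; [|split; [|split]]]]].
      * intros x Hx. apply Tb in Hx. unfold in_int. lra.
      * intros x Hx. assert (nL : ~ TL a e x) by (intro; apply Hx; left; auto).
        assert (nR : ~ TL (-b) f (-x)) by (intro; apply Hx; right; auto).
        destruct (LC x nL) as [e1 [He1 He1']]. destruct (RC (-x) nR) as [e2 [He2 He2']].
        exists (Rmin e1 e2). split; [apply Rmin_pos; lra|].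
        intros y Hy [Ly|Ry].
        -- apply (He1' y); auto. eapply Rlt_le_trans; [apply Hy|apply Rmin_l].
        -- apply (He2' (-y)); auto. replace (-y - -x) with (-(y - x)) by ring.
           rewrite Rabs_Ropp. eapply Rlt_le_trans; [apply Hy|apply Rmin_r].
      * intros x y hxy. destruct (Hcut l1) as [_ [_ [hn _]]].
        destruct (hn x y hxy) as [c [d [? [? [? h]]]]]. exists c, d. repeat split; auto.
        intros z hz hz'. apply (h z hz (Tsub z hz')).
      * left; left; auto.
      * right; left; auto.
      * intros x Hx. destruct (Hcut l1) as [_ [_ [_ [_ [_ [h _]]]]]]. apply h, Tsub, Hx.
      * intros p q Hpq. pose proof Hpq as [Tp [Tq [hpq Hb]]].
        destruct Tp as [Lp|Rp]; destruct Tq as [Lq|Rq].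
        -- destruct (LG p q) as [t [r [Hs [Ep Eq]]]].
           { split; auto. split; auto. split; auto. intros z hz Lz. apply (Hb z hz). left; auto. }
           assert (hq := LB q Lq).
           assert (Hl1r : lt l1 r).
           { apply NNPP; intro h. apply (not_lt_le I lt tri) in h.
             assert (e l1 <= e r) by (apply LM; auto). lra. }
           assert (Hl1t : le lt l1 t) by (apply (succ_le I lt tri t r l1); auto).
           assert (Hl1r' : le lt l1 r) by (left; auto).
           assert (le lt t r) by (left; apply Hs).
           destruct (H3 t r Hs (e t) (- f t) (e r) (- f r)) as [HH _].
           { apply Icomp; auto. } { apply Icomp; auto. }
           { apply LM; auto. } { assert (f r <= f t) by (apply RM; auto). lra. }
           rewrite Ep, Eq. apply HH. lra.
        -- assert (hp := LB p Lp). assert (hq := RB (-q) Rq).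
           assert (p = a0).
           { apply NNPP; intro h. apply (Hb a0); [lra|left; auto]. }
           assert (q = b0).
           { apply NNPP; intro h. apply (Hb b0); [lra|right; auto]. }
           subst. destruct (Hcut l1) as [_ [_ [_ [_ [_ [_ h]]]]]]. apply h.
           repeat split; auto.
        -- assert (hp := RB (-p) Rp). assert (hq := LB q Lq). lra.
        -- destruct (RG (-q) (-p)) as [t [r [Hs [Ep Eq]]]].
           { split; auto. split; auto. split; [lra|]. intros z hz Rz. apply (Hb (-z)); [lra|].
             right. rewrite Ropp_involutive; auto. }
           assert (hp := RB (-p) Rp).
           assert (Hl1r : lt l1 r).
           { apply NNPP; intro h. apply (not_lt_le I lt tri) in h.
             assert (f l1 <= f r) by (apply RM; auto). lra. }
           assert (Hl1t : le lt l1 t) by (apply (succ_le I lt tri t r l1); auto).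
           assert (Hl1r' : le lt l1 r) by (left; auto).
           assert (le lt t r) by (left; apply Hs).
           destruct (H3 t r Hs (e t) (- f t) (e r) (- f r)) as [_ HH].
           { apply Icomp; auto. } { apply Icomp; auto. }
           { apply LM; auto. } { assert (f r <= f t) by (apply RM; auto). lra. }
           replace p with (- f t) by lra. replace q with (- f r) by lra. apply HH. lra.
Qed.
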